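(* Let $k\ge2$. For all integers $n\ge1$ and $i\ge0$, $|\mathsf{Manila}_k(n,i)|=|\mathsf{Paths}_k(n,i)|$.
   Context: Fix $k\ge2$. The sets $\mathsf{Manila}_k(n,i)$ of formal words (manila folder configurations: $n$ folders each with $k-1$ compartments, $i+1$ spines visible from below) are defined recursively: (M1) $\mathsf{Manila}_k(0,-1)=\{\epsilon\}$ (the empty configuration); (M2) for $n\ge1$, $\mathsf{Manila}_k(n,0)$ consists of all bracketed tuples $(M_1,\dots,M_{k-1})$ with $M_j\in\mathsf{Manila}_k(n_j,i_j)$ for some $n_j\ge0$ and any $i_j$, where $n_1+\dots+n_{k-1}=n-1$; (M3) for $\ell>1$, $\mathsf{Manila}_k(n,\ell-1)$ consists of all concatenations $M_1M_2\cdots M_\ell$ with $M_j\in\mathsf{Manila}_k(n_j,0)$ and $n_1+\dots+n_\ell=n$. $\mathsf{Paths}_k(n,i)$ is the set of lattice paths from $((k-1)n,n)$ to $(0,0)$ using unit south steps $(0,-1)$ and unit west steps $(-1,0)$, staying in the first quadrant weakly below the line $(k-1)y=x$ (i.e. $(k-1)y\le x$ at every point), which meet the line $(k-1)y=x$ at exactly $i$ lattice points other than the two endpoints. *)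

(* Defs.v *)
From HB Require Import structures.
From mathcomp Require Import all_boot all_order all_algebra.
Set Implicit Arguments. Unset Strict Implicit. Unset Printing Implicit Defensive.

Inductive sym := LP | Comma | RP.

Definition sym_eqb (a b : sym) : bool :=
  match a, b with LP, LP | Comma, Comma | RP, RP => true | _, _ => false end.
Lemma sym_eqP : Equality.axiom sym_eqb.
Proof. by case; case; constructor. Qed.
HB.instance Definition _ := hasDecEq.Build sym sym_eqP.

Definition word := seq sym.

Definition commasep (ws : seq word) : word :=
  match ws with
  | [::] => [::]
  | w :: ws' => w ++ flatten [seq Comma :: v | v <- ws']
  end.

Definition bracket (ws : seq word) : word := LP :: commasep ws ++ [:: RP].

(* manila k n i w  <->  w \in Manila_k(n,i)
   manila_tuple k c N ws <-> ws = [M_1;...;M_c], M_j \in Manila_k(n_j,i_j)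
                             (any i_j), n_1+...+n_c = N
   manila_blocks k l N ws <-> ws = [M_1;...;M_l], M_j \in Manila_k(n_j,0),
                             n_1+...+n_l = N *)
Inductive manila (k : nat) : nat -> int -> word -> Prop :=
| ManM1 : manila k 0 (-1)%R [::]
| ManM2 n ws : 0 < n -> manila_tuple k k.-1 n.-1 ws ->
    manila k n 0%R (bracket ws)
| ManM3 l n ws : 1 < l -> manila_blocks k l n ws ->
    manila k n (Posz l.-1) (flatten ws)
with manila_tuple (k : nat) : nat -> nat -> seq word -> Prop :=
| TupNil : manila_tuple k 0 0 [::]
| TupCons c n1 i1 N w ws : manila k n1 i1 w -> manila_tuple k c N ws ->
    manila_tuple k c.+1 (n1 + N) (w :: ws)
with manila_blocks (k : nat) : nat -> nat -> seq word -> Prop :=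
| BlkNil : manila_blocks k 0 0 [::]
| BlkCons l n1 N w ws : manila k n1 0%R w -> manila_blocks k l N ws ->
    manila_blocks k l.+1 (n1 + N) (w :: ws).

(* A path from ((k-1)n, n) to (0,0) is the sequence of its unit steps:
   true = south step (0,-1), false = west step (-1,0). *)
Definition path_pt (k n : nat) (p : seq bool) (j : nat) : nat * nat :=
  let q := take j p in ((k.-1 * n - count (fun b => ~~ b) q)%N, (n - count id q)%N).

Definition below (k : nat) (pt : nat * nat) : bool := (k.-1 * pt.2 <= pt.1)%N.
Definition online (k : nat) (pt : nat * nat) : bool := (k.-1 * pt.2 == pt.1)%N.

Definition is_kpath (k n : nat) (p : seq bool) : bool :=
  [&& count id p == n, count (fun b => ~~ b) p == (k.-1 * n)%N &
      all (fun j => below k (path_pt k n p j)) (iota 0 (size p).+1)].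

(* number of lattice points of p on the line (k-1)y = x, endpoints excluded *)
Definition touches (k n : nat) (p : seq bool) : nat :=
  count (fun j => online k (path_pt k n p j)) (iota 1 (size p).-1).

Definition in_Paths (k n i : nat) (p : seq bool) : Prop :=
  is_kpath k n p /\ touches k n p = i.

(* Main.v *)
Require Import Defs.
From HB Require Import structures.
From mathcomp Require Import all_boot all_order all_algebra.
From mathcomp Require Import zify.
Set Implicit Arguments. Unset Strict Implicit. Unset Printing Implicit Defensive.

Definition stp (k h : nat) (b : bool) := if b then (h + k.-1)%N else h.-1.
Fixpoint wf (k f h : nat) (p : seq bool) : option nat :=
  match p with
  | [::] => Some h
  | b :: p' => if b then wf k f (h + k.-1) p' else if (f < h)%N then wf k f h.-1 p' else None
  end.
Definition endh k h p := foldl (stp k) h p.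
Fixpoint zc (k h : nat) (p : seq bool) : nat :=
  match p with
  | [::] => 0
  | b :: p' => (((p' != [::]) && (stp k h b == 0%N)) + zc k (stp k h b) p')%N
  end.

Lemma wf_cat k f h p q : wf k f h (p ++ q) = obind (wf k f ^~ q) (wf k f h p).
Proof. elim: p h => [|b p IH] h //=. case: b => //=. by case: ifP. Qed.

Lemma wf_shift k f h m p : wf k (f + m) (h + m) p = omap (addn^~ m) (wf k f h p).
Proof.
elim: p h => [|b p IH] h //=. case: b.
  by rewrite addnAC IH.
rewrite ltn_add2r; case: ifP => // lt.
have -> : (h + m).-1 = (h.-1 + m)%N by lia.
exact: IH.
Qed.

Lemma wf_floor k f g h p x : (f <= g)%N -> wf k g h p = Some x -> wf k f h p = Some x.
Proof.
move=> fg; elim: p h => [|b p IH] h //=. case: b; first exact: IH.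
case: ifP => // lt; rewrite ifT; [exact: IH | lia].
Qed.

Lemma wf_val k f h p x : wf k f h p = Some x ->
  endh k h p = x /\ (x + count (fun b => ~~ b) p = h + k.-1 * count id p)%N.
Proof.
rewrite /endh; elim: p h => [|b p IH] h /=.
  move=> [<-]; lia.
case: b => /=.
  move=> /IH [-> e]; split => //; rewrite mulnDr; lia.
case: ifP => // lt /IH [-> e]; split => //; lia.
Qed.

Lemma first_hit k p h s x : wf k 0 s p = Some x -> (x <= h < s)%N ->
  exists D q, p = D ++ false :: q /\ wf k h.+1 s D = Some h.+1 /\ wf k 0 h q = Some x.
Proof.
elim: p s => [|b p IH] s /=.
  move=> [->]; lia.
case: b.
  move=> /IH H hs. have [|D [q [-> [H1 H2]]]] := H; first lia.
  by exists (true :: D), q.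
case: ifP => // s0 H hs.
have [e|ne] := eqVneq s.-1 h.
  exists [::], p; split => //=; rewrite -e. split => //. congr Some; lia.
have [|D [q [-> [H1 H2]]]] := IH _ H; first lia.
exists (false :: D), q; split => //=; rewrite ifT //; lia.
Qed.

Lemma wf_exc k p f h : (f <= h)%N -> wf k 0 0 p = Some 0 -> wf k f h p = Some h.
Proof.
move=> fh H. have := wf_shift k 0 0 h p. rewrite H /= !add0n => E.
exact: (wf_floor fh E).
Qed.

Definition sepj {T} (x : T) (ds : seq (seq T)) : seq T :=
  match ds with [::] => [::] | d :: ds' => d ++ flatten [seq x :: e | e <- ds'] end.

Lemma sepj_cons T (x : T) d ds : sepj x (d :: ds) = d ++ (if ds is [::] then [::] else x :: sepj x ds).
Proof. by case: ds. Qed.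

Lemma tuple_split k c D : wf k 0 c D = Some 0 ->
  exists ds, [/\ size ds = c.+1, D = sepj false ds & all (fun d => wf k 0 0 d == Some 0%N) ds].
Proof.
elim: c D => [|c IH] D H.
  by exists [:: D]; rewrite /= cats0 H.
have [|D1 [q [-> [H1 H2]]]] := first_hit (h:=c) H; first lia.
have [ds [s1 e2 a]] := IH _ H2.
exists (D1 :: ds); split; first by rewrite /= s1.
  rewrite sepj_cons; case: ds s1 e2 a => // d ds _ -> //.
rewrite /=; apply/andP; split => //.
have := wf_shift k 0 0 c.+1 D1. rewrite !add0n H1.
case: (wf k 0 0 D1) => //= y [E]; apply/eqP; congr Some; lia.
Qed.

Lemma zc_cat k h p q : zc k h (p ++ q) =
  (zc k h p + ((p != [::]) && (q != [::]) && (endh k h p == 0%N)) + zc k (endh k h p) q)%N.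
Proof.
rewrite /endh; elim: p h => [|b p IH] h /=; first by rewrite add0n.
rewrite IH; clear IH; case: p => [|b' p'] /=.
  by case: q => [|c q] /=; rewrite ?addn0 ?andbF ?andbT //= addnC.
by rewrite !addnA.
Qed.

Lemma zc_floor k f h p x : (0 < f <= h)%N -> wf k f h p = Some x -> zc k h p = 0%N.
Proof.
elim: p h => [|b p IH] h //= fh.
case: b => /=.
  move=> H; rewrite (IH _ _ H); last lia. rewrite addn0 /stp /=. 
  by case: p {IH H} => //= c p; apply/eqP; lia.
case: ifP => // lt H; rewrite (IH _ _ H); last lia.
rewrite addn0 /stp /=. by case: p {IH H} => //= c p; apply/eqP; lia.
Qed.

Lemma prime_zc k D : (0 < k.-1)%N -> wf k 1 k.-1 D = Some 1%N ->
  zc k 0 (true :: D ++ [:: false]) = 0%N /\ wf k 0 0 (true :: D ++ [:: false]) = Some 0%N.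
Proof.
move=> K0 H. split.
  rewrite /= zc_cat /= (zc_floor _ H); last lia.
  have [-> _] := wf_val H. rewrite /stp /= add0n (negbTE (lt0n_neq0 K0)) !andbF.
  by [].
by rewrite /= wf_cat add0n (wf_floor _ H).
Qed.

Definition enc (w : word) : seq bool := map (fun s => s == LP) w.

Fixpoint dec_aux (k : nat) (st : seq nat) (p : seq bool) : word :=
  match p with
  | [::] => [::]
  | true :: p' => LP :: dec_aux k (k.-1 :: st) p'
  | false :: p' => match st with
     | [::] => RP :: dec_aux k [::] p'
     | c :: st' => if (c <= 1)%N then RP :: dec_aux k st' p' else Comma :: dec_aux k (c.-1 :: st') p'
     end
  end.

Lemma enc_cons s w : enc (s :: w) = (s == LP) :: enc w.
Proof. by []. Qed.

Lemma enc_dec k st p : enc (dec_aux k st p) = p.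
Proof.
elim: p st => [|b p IH] st //.
case: b; first by rewrite /= IH.
case: st => [|c st]; first by rewrite /= IH.
by rewrite /=; case: ifP => _ /=; rewrite IH.
Qed.

Scheme manila_ind3 := Induction for manila Sort Prop
with manila_tuple_ind3 := Induction for manila_tuple Sort Prop
with manila_blocks_ind3 := Induction for manila_blocks Sort Prop.
Combined Scheme manila_mut from manila_ind3, manila_tuple_ind3, manila_blocks_ind3.

Lemma tuple_size k c N ws : manila_tuple k c N ws -> size ws = c.
Proof. by elim => //= ? ? ? ? ? ? _ _ ->. Qed.

Lemma tuple_nil k c N : manila_tuple k c N [::] -> c = 0%N /\ N = 0%N.
Proof. by move=> H; inversion H. Qed.

Lemma commasep_cons w ws : commasep (w :: ws) = w ++ (if ws is [::] then [::] else Comma :: commasep ws).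
Proof. by case: ws. Qed.

Lemma enc_cat w v : enc (w ++ v) = enc w ++ enc v.
Proof. exact: map_cat. Qed.

Lemma mut_props k : (0 < k.-1)%N ->
 (forall n i w, manila k n i w -> [/\ wf k 0 0 (enc w) = Some 0%N, count id (enc w) = n
     & forall st q, dec_aux k st (enc w ++ q) = w ++ dec_aux k st q])
 /\ (forall c N ws, manila_tuple k c N ws -> (0 < c)%N ->
     [/\ forall f, wf k f.+1 (f + c) (enc (commasep ws)) = Some f.+1,
         count id (enc (commasep ws)) = N
       & forall st q, dec_aux k (c :: st) (enc (commasep ws) ++ false :: q)
           = commasep ws ++ RP :: dec_aux k st q])
 /\ (forall l N ws, manila_blocks k l N ws -> [/\ wf k 0 0 (enc (flatten ws)) = Some 0%N,
     count id (enc (flatten ws)) = N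
     & forall st q, dec_aux k st (enc (flatten ws) ++ q) = flatten ws ++ dec_aux k st q]).
Proof.
move=> K0.
apply: (manila_mut (P := fun n i w _ => [/\ wf k 0 0 (enc w) = Some 0%N, count id (enc w) = n
     & forall st q, dec_aux k st (enc w ++ q) = w ++ dec_aux k st q])
  (P0 := fun c N ws _ => (0 < c)%N ->
     [/\ forall f, wf k f.+1 (f + c) (enc (commasep ws)) = Some f.+1,
         count id (enc (commasep ws)) = N
       & forall st q, dec_aux k (c :: st) (enc (commasep ws) ++ false :: q)
           = commasep ws ++ RP :: dec_aux k st q])
  (P1 := fun l N ws _ => [/\ wf k 0 0 (enc (flatten ws)) = Some 0%N,
     count id (enc (flatten ws)) = N
     & forall st q, dec_aux k st (enc (flatten ws) ++ q) = flatten ws ++ dec_aux k st q])).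
- by [].
- move=> n ws n0 T [//|W C D]. rewrite /bracket /enc /= -/(enc _) enc_cat. split.
  + by rewrite add0n wf_cat (wf_floor _ (W 0%N)).
  + by rewrite count_cat C /=; lia.
  + move=> st q. by rewrite -catA /= D -catA.
- move=> l n ws _ B [W C D]; by split.
- by [].
- move=> c n1 i1 N w ws Mw [W1 C1 D1] T IH _.
  case: ws T IH => [|v ws] T IH.
    have [-> ->] := tuple_nil T.
    rewrite /= cats0; split.
    + by move=> f; rewrite addn1; apply: wf_exc W1.
    + by rewrite C1 addn0.
    + by move=> st q; rewrite D1 /=.
  have c0 : (0 < c)%N by rewrite -(tuple_size T).
  have [W C D] := IH c0.
  rewrite commasep_cons enc_cat /=. split.
  + move=> f; rewrite wf_cat (wf_exc _ W1) /=; last lia.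
    rewrite ifT; last lia. have -> : (f + c.+1).-1 = (f + c)%N by lia. exact: W.
  + by rewrite count_cat C1 /= C.
  + move=> st q; rewrite -catA D1 /= ifF; last by case: (c) c0.
    have E := D st q; rewrite /commasep in E *; by rewrite E -[RHS]catA.
- by split.
- move=> l n1 N w ws Mw [W1 C1 D1] B [W C D] /=; rewrite enc_cat; split.
  + by rewrite wf_cat W1.
  + by rewrite count_cat C1 C.
  + by move=> st q; rewrite -catA D1 D catA.
Qed.

Lemma prime_inv k n w : manila k n 0%R w -> exists ws, w = bracket ws /\ manila_tuple k k.-1 n.-1 ws.
Proof.
move=> H; inversion H; subst; first by exists ws.
exfalso; lia.
Qed.

Lemma blocks_nil k l N : manila_blocks k l N [::] -> l = 0%N /\ N = 0%N.
Proof. by move=> H; inversion H. Qed.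

Lemma manila_pos_blocks k n (i : nat) w : manila k n (Posz i) w ->
  exists ws, manila_blocks k i.+1 n ws /\ w = flatten ws.
Proof.
move=> H; inversion H; subst.
  exists [:: bracket ws]; split; last by rewrite /= cats0.
  have := BlkCons H (BlkNil k); by rewrite addn0.
exists ws; split => //. by rewrite prednK //; lia.
Qed.

Lemma prime_props k n w : (0 < k.-1)%N -> manila k n 0%R w ->
  [/\ zc k 0 (enc w) = 0%N, wf k 0 0 (enc w) = Some 0%N & enc w != [::]].
Proof.
move=> K0 /prime_inv [ws [-> T]].
have [_ [Tp _]] := mut_props K0.
have [W _ _] := Tp _ _ _ T K0.
have := W 0%N. rewrite add0n => W0.
have [Z1 Z2] := prime_zc K0 W0.
by rewrite /bracket /enc /= -/(enc _) enc_cat.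
Qed.

Lemma blocks_zc k l N ws : (0 < k.-1)%N -> manila_blocks k l N ws -> zc k 0 (enc (flatten ws)) = l.-1.
Proof.
move=> K0; elim => // {}l n1 {}N w {}ws Mw B IH /=.
have [Z W ne] := prime_props K0 Mw.
rewrite enc_cat zc_cat Z (proj1 (wf_val W)) IH add0n eqxx andbT ne /=.
case: ws B IH => [|w2 ws2] B IH.
  by have [-> _] := blocks_nil B.
inversion B; subst.
have [_ _ ne2] := prime_props K0 H3.
by rewrite /= enc_cat; case: (enc w2) ne2.
Qed.

Lemma map_sepj T U (f : T -> U) x ds : map f (sepj x ds) = sepj (f x) (map (map f) ds).
Proof.
case: ds => [|d ds] //=; rewrite map_cat; congr (_ ++ _).
elim: ds => //= e ds IH. by rewrite map_cat IH.
Qed.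

Lemma enc_commasep ws : enc (commasep ws) = sepj false (map enc ws).
Proof. have -> : commasep ws = sepj Comma ws by case: ws. by rewrite /enc map_sepj. Qed.

Lemma count_sepj ds : count id (sepj false ds) = sumn (map (count id) ds).
Proof.
case: ds => [|d ds] //=; rewrite count_cat; congr (_ + _)%N.
elim: ds => //= e ds IH. by rewrite count_cat IH.
Qed.

Lemma size_sepj (T : eqType) (x : T) (ds : seq (seq T)) d : d \in ds -> (size d <= size (sepj x ds))%N.
Proof.
case: ds => [|d0 ds] //=; rewrite size_cat inE => /orP [/eqP -> | ]; first lia.
elim: ds => //= e ds IH; rewrite inE size_cat /= => /orP [/eqP -> | /IH]; lia.
Qed.

Lemma build_tuple k ds : (forall d, d \in ds -> exists i w, manila k (count id d) i w /\ enc w = d) ->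
  exists ws, manila_tuple k (size ds) (sumn (map (count id) ds)) ws /\ map enc ws = ds.
Proof.
elim: ds => [|d ds IH] H; first by exists [::]; split => //; constructor.
have [|ws [T E]] := IH; first by move=> e he; apply: H; rewrite inE he orbT.
have [i [w [M Ew]]] := H d (mem_head _ _).
by exists (w :: ws); split; [apply: TupCons M T | rewrite /= Ew E].
Qed.

Lemma path_to_manila k : (0 < k.-1)%N -> forall m p, (size p <= m)%N -> wf k 0 0 p = Some 0%N ->
  p != [::] -> exists w, manila k (count id p) (Posz (zc k 0 p)) w /\ enc w = p.
Proof.
move=> K0; elim=> [|m IH] p sp W ne.
  by case: p sp W ne.
have IH' : forall d, (size d <= m)%N -> wf k 0 0 d = Some 0%N ->
    exists i w, manila k (count id d) i w /\ enc w = d.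
  move=> d sd Wd; case: (eqVneq d [::]) => [-> | nd].
    by exists (-1)%R, [::]; split => //; constructor.
  by have [w [M E]] := IH d sd Wd nd; exists (Posz (zc k 0 d)), w.
case: p sp W ne => [|[] p'] //= sp W _.
have [|D [q [Ep [WD Wq]]]] := first_hit (h := 0%N) W; first lia.
subst p'.
have WD' : wf k 0 k.-1.-1 D = Some 0%N.
  have := wf_shift k 0 k.-1.-1 1 D. rewrite add0n addn1 prednK // WD.
  case: (wf k 0 k.-1.-1 D) => //= y [] E; congr Some; lia.
have [ds [sds ED all_ds]] := tuple_split WD'.
have [|ws [T Ews]] := build_tuple (k := k) (ds := ds).
  move=> d hd; apply: IH'; last by apply/eqP; exact: (allP all_ds d hd).
  have := size_sepj false hd; rewrite -ED; move: sp; rewrite /= size_cat /=; lia.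
rewrite sds prednK // in T.
have MP : manila k (sumn (map (count id) ds)).+1 0%R (bracket ws) by apply: ManM2.
have EP : enc (bracket ws) = true :: D ++ [:: false].
  by rewrite /bracket /enc /= -/(enc _) enc_cat enc_commasep Ews ED.
have [ZP WP] := prime_zc K0 WD.
have CD : count id D = sumn (map (count id) ds) by rewrite ED count_sepj.
have Ep : true :: D ++ false :: q = (true :: D ++ [:: false]) ++ q by rewrite /= -catA.
suff : exists w, manila k (count id ((true :: D ++ [:: false]) ++ q))
   (Posz (zc k 0 ((true :: D ++ [:: false]) ++ q))) w /\ enc w = (true :: D ++ [:: false]) ++ q.
  by rewrite -Ep; move=> H; exact: H.
rewrite zc_cat ZP add0n (proj1 (wf_val WP)) eqxx andbT /=.
case: (eqVneq q [::]) => [-> | nq].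
  exists (bracket ws); rewrite EP cats0; split => //.
  have -> : (1 + count id (D ++ [:: false]))%N = (sumn (map (count id) ds)).+1.
    by rewrite count_cat /= CD; lia.
  exact: MP.
have sq : (size q <= m)%N by move: sp; rewrite size_cat /=; lia.
have [w' [M' E']] := IH q sq Wq nq.
have [ws' [B' Ew']] := manila_pos_blocks M'.
exists (flatten (bracket ws :: ws')); split.
  have := ManM3 (l := (zc k 0 q).+2) (erefl _) (BlkCons MP B').
  have -> : (1 + count id ((D ++ [:: false]) ++ q))%N = ((sumn (map (count id) ds)).+1 + count id q)%N.
    by rewrite !count_cat /= CD; lia.
  by [].
rewrite (_ : flatten (bracket ws :: ws') = bracket ws ++ flatten ws') // enc_cat EP -Ew' E'.
by rewrite -catA.
Qed.

Lemma zc_count k h p : zc k h p = count (fun j => endh k h (take j p) == 0%N) (iota 1 (size p).-1).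
Proof.
elim: p h => [|b p IH] h //=.
rewrite IH; case: p {IH} => [|c p] //=.
congr (_ + _)%N.
by rewrite (iotaDl 1 1) count_map.
Qed.

Lemma arith1 K n t f x : (t <= n)%N -> (x + f = K * t)%N ->
  (K * (n - t) <= K * n - f)%N /\ ((K * (n - t) == K * n - f) = (x == 0%N)).
Proof.
move=> tn e; rewrite mulnBr.
have : (K * t <= K * n)%N by rewrite leq_mul2l tn orbT.
move: e; set A := (K * n)%N; set B := (K * t)%N => e le.
split; first lia.
apply/eqP/eqP; lia.
Qed.

Lemma arith2 K n t f : (t <= n)%N -> (f <= K * n)%N -> (K * (n - t) <= K * n - f)%N -> (f <= K * t)%N.
Proof.
move=> tn fn; rewrite mulnBr.
have : (K * t <= K * n)%N by rewrite leq_mul2l tn orbT.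
set A := (K * n)%N; set B := (K * t)%N => le; lia.
Qed.

Lemma prefix_wf k h q : (forall j, (j <= size q)%N ->
   (count (fun b => ~~ b) (take j q) <= h + k.-1 * count id (take j q))%N) ->
  wf k 0 h q = Some (h + k.-1 * count id q - count (fun b => ~~ b) q)%N.
Proof.
elim: q h => [|b q IH] h H /=; first by rewrite muln0 addn0 subn0.
case: b H => H.
  rewrite IH; first by congr Some; rewrite mulnDr muln1; lia.
  move=> j hj; have := H j.+1 hj; rewrite /= mulnDr muln1; lia.
have h0 : (0 < h)%N by have := H 1%N isT; rewrite /= take0 /=; lia.
rewrite h0 IH; first by congr Some; lia.
move=> j hj; have := H j.+1 hj; rewrite /=; lia.
Qed.

Lemma count_take_le (P : pred bool) j p : (count P (take j p) <= count P p)%N.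
Proof. have := count_cat P (take j p) (drop j p); rewrite cat_take_drop => ->; exact: leq_addr. Qed.

Lemma wf_take k p j : wf k 0 0 p = Some 0%N -> exists x, wf k 0 0 (take j p) = Some x.
Proof.
rewrite -{1}(cat_take_drop j p) wf_cat; case: (wf k 0 0 (take j p)) => // x _.
by exists x.
Qed.

Lemma pt_props k n p j : wf k 0 0 p = Some 0%N -> count id p = n ->
  below k (path_pt k n p j) /\ online k (path_pt k n p j) = (endh k 0 (take j p) == 0%N).
Proof.
move=> W C.
have [x Wx] := wf_take j W. have [Ex e] := wf_val Wx. rewrite add0n in e.
rewrite /below /online /path_pt /= Ex.
have tn : (count id (take j p) <= n)%N by rewrite -C count_take_le.
exact: arith1 tn e.
Qed.

Lemma paths_iff k n i p :
  in_Paths k n i p <-> [/\ wf k 0 0 p = Some 0%N, count id p = n & zc k 0 p = i].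
Proof.
rewrite /in_Paths /is_kpath /touches zc_count.
split.
  move=> [/and3P [/eqP C /eqP N /allP A] T].
  have W : wf k 0 0 p = Some 0%N.
    rewrite prefix_wf; first by rewrite C N add0n subnn.
    move=> j hj. have := A j; rewrite mem_iota add0n ltnS hj => /(_ isT).
    rewrite /below /path_pt /= add0n; apply: arith2.
      by rewrite -C count_take_le.
    by rewrite -N count_take_le.
  split => //; rewrite -T; apply: eq_count => j.
  by rewrite (proj2 (pt_props j W C)).
move=> [W C Z]; split; last first.
  by rewrite -Z; apply: eq_count => j; rewrite (proj2 (pt_props j W C)).
have [_ e] := wf_val W.
apply/and3P; split; first by rewrite C.
  by rewrite add0n in e; rewrite e C.
by apply/allP => j _; exact: (proj1 (pt_props j W C)).
Qed.

Fixpoint allb m : seq (seq bool) :=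
  if m is m'.+1 then map (cons true) (allb m') ++ map (cons false) (allb m') else [:: [::]].

Lemma mem_allb m p : (p \in allb m) = (size p == m).
Proof.
elim: m p => [|m IH] [|b p] //=.
  by rewrite mem_cat; apply/orP; case => /mapP [].
rewrite mem_cat eqSS -IH; case: b.
  rewrite mem_map; last by move=> x y [].
  by case: (p \in allb m) => //=; apply/negP => /mapP [].
rewrite mem_map; last by move=> x y [].
by rewrite orbC; case: (p \in allb m) => //=; apply/negP => /mapP [].
Qed.

Lemma allb_uniq m : uniq (allb m).
Proof.
elim: m => //= m IH. rewrite cat_uniq !map_inj_uniq //; try by move=> x y [].
rewrite IH /= andbT; apply/hasPn => x /mapP [y _ ->].
by apply/negP => /mapP [].
Qed.

Lemma size_path k n p : wf k 0 0 p = Some 0%N -> count id p = n -> size p = (k.-1.+1 * n)%N.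
Proof.
move=> W C; have [_ e] := wf_val W.
have := count_predC id p.
have -> : count (predC id) p = count (fun b => ~~ b) p by [].
rewrite C in e; lia.
Qed.

Theorem lemma5p5 (k n i : nat) : (2 <= k)%N -> (1 <= n)%N ->
  exists (sM : seq word) (sP : seq (seq bool)),
    [/\ uniq sM, (forall w, manila k n (Posz i) w <-> w \in sM),
        uniq sP, (forall p, in_Paths k n i p <-> p \in sP)
      & size sM = size sP].
Proof.
move=> k2 n1. have K0 : (0 < k.-1)%N by lia.
have kK : k = k.-1.+1 by lia.
set sP := [seq p <- allb (k * n) | (wf k 0 0 p == Some 0%N) && (count id p == n) && (zc k 0 p == i)].
have memP : forall p, (p \in sP) <-> [/\ wf k 0 0 p = Some 0%N, count id p = n & zc k 0 p = i].
  move=> p; rewrite mem_filter mem_allb; split.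
    by move=> /andP [/andP [/andP [/eqP -> /eqP ->] /eqP ->]] _.
  move=> [W C Z]; rewrite W C Z !eqxx /=.
  by rewrite (size_path W C) -kK.
have [Mp _] := mut_props K0.
exists (map (dec_aux k [::]) sP), sP; split.
- rewrite map_inj_uniq; last exact: (can_inj (enc_dec k [::])).
  by rewrite filter_uniq // allb_uniq.
- move=> w; split.
    move=> M. have [W C D] := Mp _ _ _ M.
    have [ws [B Ew]] := manila_pos_blocks M.
    have Z : zc k 0 (enc w) = i by rewrite Ew (blocks_zc K0 B).
    apply/mapP; exists (enc w); first by apply/memP.
    by have := D [::] [::]; rewrite !cats0.
  move=> /mapP [p /memP [W C Z] ->].
  have ne : p != [::] by case: p W C Z => //= _ C; lia.
  have [w' [M' E']] := path_to_manila K0 (leqnn (size p)) W ne.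
  rewrite C Z in M'.
  have [_ _ D] := Mp _ _ _ M'.
  by have := D [::] [::]; rewrite !cats0 E' => ->.
- by rewrite filter_uniq // allb_uniq.
- by move=> p; rewrite paths_iff memP.
- by rewrite size_map.
Qed.
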